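(* Fix $n\in\{1,\dots,N\}$ and write $U(y,t)=U(v_n,y,t)$. Then for $t\in[0,1)$: $U_t+\beta(U(y+1,t)-2U(y,t)+U(y-1,t))=0$ for $y>\overline m_n$ or $y<\underline m_n$; $U_t+\beta(U(y+1,t)-2U(y,t)+U(y-1,t))=(p(\underline m_n,t)-v_n)\beta$ for $y=\overline m_n$; $U_t+\beta(U(y+1,t)-2U(y,t)+U(y-1,t))=(v_n-p(\overline m_n,t))\beta$ for $y=\underline m_n$; $U(y,t)-U(y+1,t)-(v_n-p(y,t))=0$ for $y\ge\overline m_n$; $U(y,t)-U(y-1,t)+(v_n-p(y,t))=0$ for $y\le\underline m_n$.
   Context: Order size $1$, $N<\infty$, $v_1<\dots<v_N$. $Z$ is the difference of two independent Poisson processes with intensity $\beta>0$; $\mathbb{E}^y$ denotes expectation with $Z_0=y$. Strictly increasing $(a_n)_{n=1}^{N+1}\subset\mathbb{Z}\cup\{\pm\infty\}$, $a_1=-\infty$, $a_{N+1}=\infty$, $\bigcup_n[a_n,a_{n+1})=\mathbb{Z}\cup\{-\infty\}$, $m_n=(a_n+a_{n+1}-1)/2\notin\mathbb{Z}$, $\underline m_n=\lfloor m_n\rfloor$, $\overline m_n=\lceil m_n\rceil$ (with $\underline m_1=\overline m_1=-\infty$, $\underline m_N=\overline m_N=+\infty$). $P(y)=v_n$ for $y\in[a_n,a_{n+1})$; $p(y,t)=\mathbb{E}^y[P(Z_{1-t})]$; $A(y)=P(y+1)$, $B(y)=P(y-1)$. $U(v_n,y,1)=\sum_{j=y}^{a_n-1}(v_n-A(j))\mathbf{1}_{\{y\le\underline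 m_n\}}+\sum_{j=a_{n+1}}^y(B(j)-v_n)\mathbf{1}_{\{y\ge\overline m_n\}}$ (empty sums $0$); for $t<1$, $U(v_n,y,t)=U(v_n,y,1)+\beta\int_t^1(p(y,r)-p(y-1,r))dr$ if $y\ge\overline m_n$, and $U(v_n,y,t)=U(v_n,y,1)+\beta\int_t^1(p(y+1,r)-p(y,r))dr$ if $y\le\underline m_n$. *)

(* Defs.v *)
From Stdlib Require Import Reals ZArith Lia List.
From Coquelicot Require Import Coquelicot.
Open Scope R_scope.

Definition pois (lam : R) (k : nat) : R := exp (- lam) * lam ^ k / INR (fact k).

(* p(y,t) = E^y[P(Z_{1-t})] where Z_{1-t} - Z_0 = N1 - N2, with N1, N2 independent
   Poisson(beta*(1-t)) variables (the two Poisson processes at time 1-t). *)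
Definition pZ (beta : R) (P : Z -> R) (y : Z) (t : R) : R :=
  Series (fun i => Series (fun j =>
    pois (beta * (1 - t)) i * pois (beta * (1 - t)) j
      * P (y + Z.of_nat i - Z.of_nat j)%Z)).

Inductive zbar : Type := ZFin (z : Z) | ZNinf | ZPinf.

Definition zleb (x y : zbar) : bool :=
  match x, y with
  | ZNinf, _ => true
  | _, ZPinf => true
  | ZFin a, ZFin b => Z.leb a b
  | _, _ => false
  end.

Definition zltb (x y : zbar) : bool := zleb x y && negb (zleb y x).

(* thresholds: a_1 = -oo, a_{N+1} = +oo, a_k (2 <= k <= N) given by a k *)
Definition alow (N : nat) (a : nat -> Z) (n : nat) : zbar :=
  if Nat.eqb n 1 then ZNinf else ZFin (a n).
Definition aup (N : nat) (a : nat -> Z) (n : nat) : zbar :=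
  if Nat.eqb n N then ZPinf else ZFin (a (S n)).

Definition in_band (N : nat) (a : nat -> Z) (n : nat) (y : Z) : Prop :=
  zleb (alow N a n) (ZFin y) = true /\ zltb (ZFin y) (aup N a n) = true.

(* underline m_n = floor((a_n + a_{n+1} - 1)/2), overline m_n = ceil(...),
   with the conventions underline m_1 = overline m_1 = -oo and
   underline m_N = overline m_N = +oo (the n = 1 convention takes priority). *)
Definition mlo (N : nat) (a : nat -> Z) (n : nat) : zbar :=
  if Nat.eqb n 1 then ZNinf else if Nat.eqb n N then ZPinf
  else ZFin (Z.div (a n + a (S n) - 1) 2).
Definition mhi (N : nat) (a : nat -> Z) (n : nat) : zbar :=
  if Nat.eqb n 1 then ZNinf else if Nat.eqb n N then ZPinf
  else ZFin (Z.div (a n + a (S n)) 2).   (* ceil(x/2) = floor((x+1)/2) *)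

(* \sum_{j=lo}^{hi} f j, empty (= 0) if hi < lo *)
Definition zsum (f : Z -> R) (lo hi : Z) : R :=
  fold_right Rplus 0
    (map (fun k => f (lo + Z.of_nat k)%Z) (seq 0 (Z.to_nat (hi - lo + 1)))).

(* \sum_{j=lo}^{hi} with extended bounds; an upper bound -oo or a lower bound +oo
   gives the empty sum.  (Infinite ranges never occur under the indicators.) *)
Definition zsumb (f : Z -> R) (lo hi : zbar) : R :=
  match lo, hi with
  | ZFin l, ZFin h => zsum f l h
  | _, _ => 0
  end.

Definition zpred (x : zbar) : zbar :=
  match x with ZFin z => ZFin (z - 1)%Z | w => w end.

(* U(v_n, y, 1), with A(j) = P(j+1), B(j) = P(j-1) *)
Definition U1 (N : nat) (v : nat -> R) (a : nat -> Z) (P : Z -> R) (n : nat) (y : Z) : R :=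
  (if zleb (ZFin y) (mlo N a n)
   then zsumb (fun j => v n - P (j + 1)%Z) (ZFin y) (zpred (alow N a n)) else 0)
  + (if zleb (mhi N a n) (ZFin y)
     then zsumb (fun j => P (j - 1)%Z - v n) (aup N a n) (ZFin y) else 0).

Definition Uf (beta : R) (N : nat) (v : nat -> R) (a : nat -> Z) (P : Z -> R)
    (n : nat) (y : Z) (t : R) : R :=
  U1 N v a P n y +
  (if zleb (mhi N a n) (ZFin y)
   then beta * RInt (fun r => pZ beta P y r - pZ beta P (y - 1)%Z r) t 1
   else beta * RInt (fun r => pZ beta P (y + 1)%Z r - pZ beta P y r) t 1).

Definition lapU (beta : R) (N : nat) (v : nat -> R) (a : nat -> Z) (P : Z -> R)
    (n : nat) (y : Z) (t : R) : R :=
  Uf beta N v a P n (y + 1)%Z t - 2 * Uf beta N v a P n y t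
  + Uf beta N v a P n (y - 1)%Z t.

(* Main.v *)
Require Import Defs.
From Stdlib Require Import Reals ZArith Lia Lra List.
From Coquelicot Require Import Coquelicot.
Open Scope R_scope.

Lemma exs_bound (a M : nat -> R) :
  (forall n, Rabs (a n) <= M n) -> ex_series M -> ex_series a.
Proof. intros H HM. apply (ex_series_le a M); [exact H | exact HM]. Qed.

Lemma Series_abs_le (a M : nat -> R) :
  (forall n, Rabs (a n) <= M n) -> ex_series M -> Rabs (Series a) <= Series M.
Proof.
  intros H HM.
  eapply Rle_trans. apply Series_Rabs.
  apply (exs_bound _ M); [intros n; rewrite Rabs_Rabsolu; apply H| exact HM].
  apply Series_le; [|exact HM]. intros n; split; [apply Rabs_pos|apply H].
Qed.

Lemma tail_bound (a M : nat -> R) (n : nat) :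
  (forall n, Rabs (a n) <= M n) -> ex_series M ->
  Rabs (Series a - sum_f_R0 a n) <= Series M - sum_f_R0 M n.
Proof.
  intros H HM.
  assert (Ha : ex_series a) by (apply (exs_bound _ M); auto).
  rewrite (Series_incr_n a (S n)) by (auto with arith || lia).
  rewrite (Series_incr_n M (S n)) by (auto with arith || lia).
  simpl pred.
  replace (sum_f_R0 a n + Series (fun k => a (S n + k)%nat) - sum_f_R0 a n)
    with (Series (fun k => a (S n + k)%nat)) by ring.
  replace (sum_f_R0 M n + Series (fun k => M (S n + k)%nat) - sum_f_R0 M n)
    with (Series (fun k => M (S n + k)%nat)) by ring.
  apply Series_abs_le. intros; apply H.
  apply (ex_series_incr_n M (S n)). exact HM.
Qed.

Lemma sum_cv (M : nat -> R) : ex_series M -> Un_cv (fun n => sum_f_R0 M n) (Series M).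
Proof.
  intros HM. apply is_lim_seq_Reals.
  apply is_lim_seq_ext with (u := sum_n M).
  intros n; apply sum_n_Reals.
  apply Series_correct. exact HM.
Qed.

Lemma series_derive (f f' : nat -> R -> R) (c : R) (r : posreal) (M : nat -> R) :
  ex_series M ->
  (forall n x, Rabs (x - c) < r -> is_derive (f n) x (f' n x)) ->
  (forall n x, Rabs (x - c) < r -> Rabs (f n x) <= M n) ->
  (forall n x, Rabs (x - c) < r -> Rabs (f' n x) <= M n) ->
  forall x, Rabs (x - c) < r ->
  is_derive (fun x => Series (fun n => f n x)) x (Series (fun n => f' n x)).
Proof.
  intros HM Hd Hf Hf' x Hx.
  apply is_derive_Reals.
  apply (CVU_derivable (fun N y => sum_f_R0 (fun n => f n y) N)
          (fun N y => sum_f_R0 (fun n => f' n y) N)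
          (fun y => Series (fun n => f n y)) (fun y => Series (fun n => f' n y)) c r);
    [ | | | exact Hx].
  - intros eps Heps.
    pose proof (sum_cv M HM) as Hc.
    destruct (Hc eps Heps) as [N0 HN].
    exists N0. intros n y Hn Hy.
    eapply Rle_lt_trans. apply (tail_bound _ M n); [intros; apply Hf'; exact Hy | exact HM].
    specialize (HN n Hn). unfold R_dist in HN.
    rewrite Rabs_minus_sym in HN.
    eapply Rle_lt_trans; [apply Rle_abs|exact HN].
  - intros y Hy. intros eps Heps.
    pose proof (sum_cv M HM) as Hc.
    destruct (Hc eps Heps) as [N0 HN].
    exists N0. intros n Hn. unfold R_dist. rewrite Rabs_minus_sym.
    eapply Rle_lt_trans. apply (tail_bound _ M n); [intros; apply Hf; exact Hy | exact HM].
    specialize (HN n Hn). unfold R_dist in HN.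
    rewrite Rabs_minus_sym in HN.
    eapply Rle_lt_trans; [apply Rle_abs|exact HN].
  - intros n y Hy. induction n as [|n IH]; simpl.
    + apply is_derive_Reals. apply Hd. exact Hy.
    + apply derivable_pt_lim_plus. exact IH. apply is_derive_Reals. apply Hd. exact Hy.
Qed.

Definition pw (beta t : R) (k : nat) : R := pois (beta * (1 - t)) k.
Definition pm (beta t : R) (k : nat) : R :=
  match k with O => 0 | S k => pw beta t k end.
Definition ek (W : R) (k : nat) : R := W ^ k / INR (fact k).
Definition emk (W : R) (k : nat) : R := match k with O => 0 | S k => ek W k end.

Lemma ex_ek W : ex_series (ek W).
Proof.
  exists (exp W). pose proof (is_exp_Reals W) as H.
  unfold is_pseries in H. eapply is_series_ext; [|exact H].
  intros n. simpl. unfold ek, scal; simpl. unfold mult; simpl.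
  rewrite pow_n_pow. unfold Rdiv. reflexivity.
Qed.

Lemma ex_emk W : ex_series (emk W).
Proof.
  apply ex_series_incr_1. simpl. apply ex_ek.
Qed.

Lemma pw_derive beta t k :
  is_derive (fun s => pw beta s k) t (- beta * (pm beta t k - pw beta t k)).
Proof.
  unfold pw, pm, pois. destruct k as [|k].
  - simpl. auto_derive; auto. change (1 + - t) with (1 - t). field.
  - auto_derive; auto.
    change (match k with 0%nat => 1 | S _ => INR k + 1 end) with (INR (S k)).
    change (INR (fact k + k * fact k)) with (INR (fact (S k))).
    change (1 + - t) with (1 - t).
    rewrite fact_simpl, mult_INR.
    unfold pw, pois. simpl pow. field. split. apply not_0_INR, fact_neq_0.
    apply not_0_INR. lia.
Qed.

Lemma pw_bound beta t W k :
  Rabs (beta * (1 - t)) <= W -> Rabs (pw beta t k) <= exp W * ek W k.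
Proof.
  intros H. unfold pw, pois, ek. set (l := beta * (1 - t)) in *.
  unfold Rdiv. rewrite !Rabs_mult. rewrite Rabs_inv.
  rewrite (Rabs_pos_eq (INR (fact k))) by apply pos_INR.
  rewrite (Rabs_pos_eq (exp _)) by (left; apply exp_pos).
  rewrite <- RPow_abs.
  assert (HI : 0 < / INR (fact k)) by (apply Rinv_0_lt_compat, lt_0_INR, lt_O_fact).
  assert (H1 : exp (- l) <= exp W).
  { destruct (Rle_lt_or_eq_dec (- l) W) as [h|h].
    - pose proof (Rabs_maj2 l). lra.
    - left; apply exp_increasing; exact h.
    - rewrite h; lra. }
  assert (H2 : Rabs l ^ k <= W ^ k).
  { apply pow_incr. split; [apply Rabs_pos|exact H]. }
  rewrite Rmult_assoc. apply Rmult_le_compat; try (left; apply exp_pos) ; auto.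
  apply Rmult_le_pos; [apply pow_le, Rabs_pos| lra].
  apply Rmult_le_compat_r; lra.
Qed.

Lemma pm_bound beta t W k :
  Rabs (beta * (1 - t)) <= W -> Rabs (pm beta t k) <= exp W * emk W k.
Proof.
  intros H. destruct k; simpl. rewrite Rabs_R0. lra. apply pw_bound; auto.
Qed.

Lemma ek_nn W k : 0 <= W -> 0 <= ek W k.
Proof. intros; unfold ek. apply Rmult_le_pos. apply pow_le; auto.
  left; apply Rinv_0_lt_compat, lt_0_INR, lt_O_fact. Qed.
Lemma emk_nn W k : 0 <= W -> 0 <= emk W k.
Proof. intros; destruct k; simpl. lra. apply ek_nn; auto. Qed.

Lemma ex_u W : ex_series (fun k => emk W k + ek W k).
Proof. apply (ex_series_plus (emk W) (ek W)); [apply ex_emk | apply ex_ek]. Qed.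

Lemma exs_scal (c : R) (a : nat -> R) : ex_series a -> ex_series (fun n => c * a n).
Proof. intros H. apply (ex_series_scal_l c a H). Qed.

Lemma dd (b : nat -> nat -> R) C (u : nat -> R) :
  ex_series u -> (forall k, 0 <= u k) ->
  (forall i j, Rabs (b i j) <= C * u i * u j) ->
  (forall i, ex_series (b i)) /\
  (forall i, Rabs (Series (b i)) <= C * Series u * u i) /\
  ex_series (fun i => Series (b i)).
Proof.
  intros Hu Hu0 Hb.
  assert (E1 : forall i, ex_series (b i)).
  { intros i. apply (exs_bound _ (fun j => (C * u i) * u j)); [apply Hb|].
    apply exs_scal; auto. }
  assert (E2 : forall i, Rabs (Series (b i)) <= C * Series u * u i).
  { intros i. eapply Rle_trans.
    apply (Series_abs_le _ (fun j => (C * u i) * u j)); [apply Hb| apply exs_scal; auto].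
    rewrite Series_scal_l. lra. }
  split; [exact E1|split; [exact E2|]].
  apply (exs_bound _ (fun i => (C * Series u) * u i)); [exact E2| apply exs_scal; auto].
Qed.

Lemma lin3 (x y z : nat -> R) c :
  ex_series x -> ex_series y -> ex_series z ->
  Series (fun k => c * (x k + y k - 2 * z k)) = c * (Series x + Series y - 2 * Series z).
Proof.
  intros Hx Hy Hz. rewrite Series_scal_l. f_equal.
  rewrite Series_minus.
  rewrite Series_plus by auto. rewrite Series_scal_l. reflexivity.
  apply (ex_series_plus x y); auto. apply exs_scal; auto.
Qed.

Lemma shift0 (a : nat -> R) : ex_series a -> a O = 0 -> Series a = Series (fun k => a (S k)).
Proof. intros H H0. rewrite Series_incr_1 by auto. rewrite H0. ring. Qed.

Section Anal.
Variable beta : R.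
Variable P : Z -> R.
Variable B : R.
Hypothesis HB : forall z, Rabs (P z) <= B.

Definition aa (y : Z) (t : R) (i j : nat) : R :=
  pw beta t i * pw beta t j * P (y + Z.of_nat i - Z.of_nat j)%Z.
Definition Dp (t : R) (k : nat) : R := - beta * (pm beta t k - pw beta t k).
Definition ad (y : Z) (t : R) (i j : nat) : R :=
  (Dp t i * pw beta t j + pw beta t i * Dp t j) * P (y + Z.of_nat i - Z.of_nat j)%Z.

Lemma B_nn : 0 <= B.
Proof. pose proof (HB 0%Z). pose proof (Rabs_pos (P 0%Z)). lra. Qed.

Section Bnd.
Variable W : R.
Variable t : R.
Hypothesis HW : Rabs (beta * (1 - t)) <= W.
Let E := exp W.
Let u k := emk W k + ek W k.
Let K := B * E * E * (1 + 4 * Rabs beta).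

Lemma W_nn : 0 <= W.
Proof. pose proof (Rabs_pos (beta * (1 - t))). lra. Qed.

Lemma pw_u k : Rabs (pw beta t k) <= E * u k.
Proof.
  pose proof (pw_bound beta t W k HW). pose proof (emk_nn W k W_nn).
  unfold u, E in *. pose proof (exp_pos W). nra.
Qed.
Lemma pm_u k : Rabs (pm beta t k) <= E * u k.
Proof.
  pose proof (pm_bound beta t W k HW). pose proof (ek_nn W k W_nn).
  unfold u, E in *. pose proof (exp_pos W). nra.
Qed.
Lemma Dp_u k : Rabs (Dp t k) <= 2 * Rabs beta * E * u k.
Proof.
  unfold Dp. rewrite Rabs_mult, Rabs_Ropp.
  pose proof (pw_u k). pose proof (pm_u k).
  pose proof (Rabs_triang (pm beta t k) (- pw beta t k)). rewrite Rabs_Ropp in H1.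
  pose proof (Rabs_pos beta).
  assert (Rabs (pm beta t k + - pw beta t k) <= 2 * E * u k) by lra.
  unfold Rminus. replace (2 * Rabs beta * E * u k) with (Rabs beta * (2 * E * u k)) by ring.
  apply Rmult_le_compat_l; auto.
Qed.
Lemma u_nn k : 0 <= u k.
Proof. unfold u. pose proof (ek_nn W k W_nn). pose proof (emk_nn W k W_nn). lra. Qed.
Lemma E_pos : 0 < E.
Proof. apply exp_pos. Qed.

Lemma prod_bound (x y : R) (i j : nat) z c1 c2 :
  Rabs x <= c1 * E * u i -> Rabs y <= c2 * E * u j -> 0 <= c1 -> 0 <= c2 ->
  Rabs (x * y * P z) <= (c1 * c2) * B * E * E * u i * u j.
Proof.
  intros Hx Hy H1 H2. rewrite !Rabs_mult.
  pose proof (HB z). pose proof (u_nn i). pose proof (u_nn j). pose proof E_pos.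
  pose proof (Rabs_pos x). pose proof (Rabs_pos y). pose proof (Rabs_pos (P z)).
  assert (Rabs x * Rabs y <= (c1 * E * u i) * (c2 * E * u j)).
  { apply Rmult_le_compat; auto. }
  assert (0 <= c1 * E * u i * (c2 * E * u j)) by (apply Rmult_le_pos; apply Rmult_le_pos; try apply Rmult_le_pos; lra).
  assert (Rabs x * Rabs y * Rabs (P z) <= (c1 * E * u i) * (c2 * E * u j) * B).
  { apply Rmult_le_compat; auto. apply Rmult_le_pos; auto. }
  nra.
Qed.

Lemma aa_bound y i j : Rabs (aa y t i j) <= K * u i * u j.
Proof.
  unfold aa. eapply Rle_trans.
  apply (prod_bound _ _ i j _ 1 1); try lra; rewrite Rmult_1_l; apply pw_u.
  unfold K. pose proof B_nn. pose proof (u_nn i). pose proof (u_nn j). pose proof E_pos.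
  pose proof (Rabs_pos beta).
  assert (0 <= B * E * E * u i * u j) by (repeat apply Rmult_le_pos; lra).
  nra.
Qed.

Lemma ad_bound y i j : Rabs (ad y t i j) <= K * u i * u j.
Proof.
  unfold ad. rewrite Rmult_plus_distr_r.
  eapply Rle_trans. apply Rabs_triang.
  pose proof (Rabs_pos beta).
  pose proof (prod_bound (Dp t i) (pw beta t j) i j (y + Z.of_nat i - Z.of_nat j)%Z (2 * Rabs beta) 1) as H1.
  pose proof (prod_bound (pw beta t i) (Dp t j) i j (y + Z.of_nat i - Z.of_nat j)%Z 1 (2 * Rabs beta)) as H2.
  rewrite Rmult_1_l in H1, H2.
  specialize (H1 (Dp_u i) (pw_u j) ltac:(lra) ltac:(lra)).
  specialize (H2 (pw_u i) (Dp_u j) ltac:(lra) ltac:(lra)).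
  unfold K. pose proof B_nn. pose proof (u_nn i). pose proof (u_nn j). pose proof E_pos.
  assert (0 <= B * E * E * u i * u j) by (repeat apply Rmult_le_pos; lra).
  nra.
Qed.

End Bnd.
End Anal.

Lemma aa_derive beta P y i j t :
  is_derive (fun s => aa beta P y s i j) t (ad beta P y t i j).
Proof.
  unfold aa, ad. set (z := (y + Z.of_nat i - Z.of_nat j)%Z).
  pose proof (pw_derive beta t i) as H1. pose proof (pw_derive beta t j) as H2.
  apply is_derive_Reals in H1. apply is_derive_Reals in H2.
  pose proof (derivable_pt_lim_mult _ _ t _ _ H1 H2) as H3.
  pose proof (derivable_pt_lim_mult _ _ t _ _ H3 (derivable_pt_lim_const (P z) t)) as H4.
  apply is_derive_Reals in H4. unfold mult_fct in H4.
  unfold Dp. unfold fct_cte in H4.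
  match type of H4 with is_derive _ _ ?v => replace (_ * P z) with v by ring end.
  exact H4.
Qed.

Lemma W_ball beta c t : Rabs (t - c) < 1 -> Rabs (beta * (1 - t)) <= Rabs beta * (Rabs (1 - c) + 1).
Proof.
  intros H. rewrite Rabs_mult. apply Rmult_le_compat_l. apply Rabs_pos.
  replace (1 - t) with ((1 - c) - (t - c)) by ring.
  eapply Rle_trans. apply Rabs_triang. rewrite Rabs_Ropp. lra.
Qed.

Lemma pZ_derive beta P B (HB : forall z, Rabs (P z) <= B) y t :
  is_derive (fun s => pZ beta P y s) t (Series (fun i => Series (ad beta P y t i))).
Proof.
  set (W := Rabs beta * (Rabs (1 - t) + 1)).
  set (u := fun k => emk W k + ek W k).
  set (K := B * exp W * exp W * (1 + 4 * Rabs beta)).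
  assert (Hu : ex_series u) by apply ex_u.
  assert (Hu0 : forall k, 0 <= u k).
  { intros k. unfold u. pose proof (Rabs_pos beta). pose proof (Rabs_pos (1 - t)).
    assert (0 <= W) by (unfold W; apply Rmult_le_pos; lra).
    pose proof (ek_nn W k H1). pose proof (emk_nn W k H1). lra. }
  assert (HA : forall x, Rabs (x - t) < 1 -> forall i j, Rabs (aa beta P y x i j) <= K * u i * u j).
  { intros x Hx i j. apply (aa_bound beta P B HB W x). apply W_ball; auto. }
  assert (HD : forall x, Rabs (x - t) < 1 -> forall i j, Rabs (ad beta P y x i j) <= K * u i * u j).
  { intros x Hx i j. apply (ad_bound beta P B HB W x). apply W_ball; auto. }
  assert (H := series_derive (fun i s => Series (aa beta P y s i)) (fun i s => Series (ad beta P y s i))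
    t (mkposreal 1 Rlt_0_1) (fun i => K * Series u * u i)).
  refine (H _ _ _ _ t _).
  - apply exs_scal; auto.
  - intros i x Hx. simpl in Hx.
    apply (series_derive (fun j s => aa beta P y s i j) (fun j s => ad beta P y s i j)
      t (mkposreal 1 Rlt_0_1) (fun j => K * u i * u j)).
    + apply exs_scal; auto.
    + intros j x' _. apply aa_derive.
    + intros j x' Hx'. apply HA; auto.
    + intros j x' Hx'. apply HD; auto.
    + exact Hx.
  - intros i x Hx. apply (dd (aa beta P y x) K u Hu Hu0 (HA x Hx)).
  - intros i x Hx. apply (dd (ad beta P y x) K u Hu Hu0 (HD x Hx)).
  - simpl. rewrite Rminus_eq_0, Rabs_R0. lra.
Qed.

Lemma Series_zero (a : nat -> R) : Series (fun n => 0 * a n) = 0.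
Proof. rewrite Series_scal_l. ring. Qed.

Lemma pZ_lap beta P B (HB : forall z, Rabs (P z) <= B) y t :
  Series (fun i => Series (ad beta P y t i)) =
  - beta * (pZ beta P (y + 1) t + pZ beta P (y - 1) t - 2 * pZ beta P y t).
Proof.
  set (W := Rabs (beta * (1 - t))).
  assert (HW : Rabs (beta * (1 - t)) <= W) by (unfold W; lra).
  set (u := fun k => emk W k + ek W k).
  set (K := B * exp W * exp W * (1 + 4 * Rabs beta)).
  assert (Hu : ex_series u) by apply ex_u.
  assert (HW0 : 0 <= W) by (apply Rabs_pos).
  assert (Hu0 : forall k, 0 <= u k).
  { intros k. unfold u. pose proof (ek_nn W k HW0). pose proof (emk_nn W k HW0). lra. }
  assert (HB0 : 0 <= B) by (pose proof (HB 0%Z); pose proof (Rabs_pos (P 0%Z)); lra).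
  assert (Hxy : forall x x' i j z, Rabs x <= exp W * u i -> Rabs x' <= exp W * u j ->
     Rabs (x * x' * P z) <= K * u i * u j).
  { intros x x' i j z H1 H2.
    eapply Rle_trans. apply (prod_bound beta P B HB W t HW x x' i j z 1 1); try lra.
    rewrite Rmult_1_l; exact H1. rewrite Rmult_1_l; exact H2.
    unfold K. pose proof (Hu0 i). pose proof (Hu0 j). pose proof (exp_pos W).
    pose proof (Rabs_pos beta).
    assert (0 <= B * exp W * exp W * u i * u j) by (repeat apply Rmult_le_pos; lra).
    replace (1 * 1 * B * exp W * exp W * u i * u j) with (B * exp W * exp W * u i * u j) by ring.
    replace (B * exp W * exp W * (1 + 4 * Rabs beta) * u i * u j) with
      ((B * exp W * exp W * u i * u j) * (1 + 4 * Rabs beta)) by ring.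
    change (emk W i + ek W i) with (u i). change (emk W j + ek W j) with (u j). nra. }
  set (b1 := fun i j => pm beta t i * pw beta t j * P (y + Z.of_nat i - Z.of_nat j)%Z).
  set (b2 := fun i j => pw beta t i * pm beta t j * P (y + Z.of_nat i - Z.of_nat j)%Z).
  assert (H1 : forall i j, Rabs (b1 i j) <= K * u i * u j).
  { intros; apply Hxy; [apply (pm_u beta W t HW)|apply (pw_u beta W t HW)]. }
  assert (H2 : forall i j, Rabs (b2 i j) <= K * u i * u j).
  { intros; apply Hxy; [apply (pw_u beta W t HW)|apply (pm_u beta W t HW)]. }
  assert (H0 : forall y' i j, Rabs (aa beta P y' t i j) <= K * u i * u j).
  { intros; apply Hxy; apply (pw_u beta W t HW). }
  destruct (dd b1 K u Hu Hu0 H1) as [E1 [_ F1]].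
  destruct (dd b2 K u Hu Hu0 H2) as [E2 [_ F2]].
  assert (D0 := fun y' => dd (aa beta P y' t) K u Hu Hu0 (H0 y')).
  destruct (D0 y) as [E0 [_ F0]].
  rewrite (Series_ext _ (fun i => - beta * (Series (b1 i) + Series (b2 i) - 2 * Series (aa beta P y t i)))).
  2:{ intros i. rewrite <- (lin3 (b1 i) (b2 i) (aa beta P y t i) (- beta)) by auto. apply Series_ext. intros j.
      unfold ad, b1, b2, aa, Dp. ring. }
  rewrite lin3 by auto.
  assert (Q1 : Series (fun i => Series (b1 i)) = pZ beta P (y + 1) t).
  { assert (Z0 : Series (b1 0%nat) = 0).
    { unfold b1. simpl pm. transitivity (Series (fun j => 0 * (pw beta t j * P (y + Z.of_nat 0 - Z.of_nat j)%Z))).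
      apply Series_ext. intros n. ring. apply Series_zero. }
    rewrite shift0 by auto.
    apply Series_ext. intros i. apply Series_ext. intros j. unfold b1. simpl pm. unfold pw.
    f_equal. f_equal. rewrite Nat2Z.inj_succ. ring. }
  assert (Q2 : Series (fun i => Series (b2 i)) = pZ beta P (y - 1) t).
  { apply Series_ext. intros i.
    rewrite shift0 by (auto; unfold b2; simpl; ring).
    apply Series_ext. intros j. unfold b2. simpl pm. unfold pw.
    f_equal. f_equal. rewrite Nat2Z.inj_succ. ring. }
  rewrite Q1, Q2. reflexivity.
Qed.

Lemma Series_tail0 (a : nat -> R) : (forall k, a (S k) = 0) -> Series a = a O.
Proof.
  intros H.
  assert (Ex : ex_series a).
  { apply ex_series_incr_1. apply (exs_bound _ (fun n => 0 * ek 0 n)).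
    intros n. rewrite H, Rabs_R0. lra. apply exs_scal, ex_ek. }
  rewrite Series_incr_1 by auto.
  rewrite (Series_ext _ (fun n => 0 * 0)) by (intros; rewrite H; ring).
  rewrite (Series_zero (fun _ => 0)). ring.
Qed.

Lemma pw1 beta k : pw beta 1 k = match k with O => 1 | S _ => 0 end.
Proof.
  unfold pw, pois. replace (beta * (1 - 1)) with 0 by ring.
  destruct k; simpl. rewrite Ropp_0, exp_0. field. unfold Rdiv. ring.
Qed.

Lemma pZ_at1 beta P y : pZ beta P y 1 = P y.
Proof.
  unfold pZ. rewrite Series_tail0.
  - rewrite Series_tail0.
    + change (pw beta 1 0 * pw beta 1 0 * P (y + Z.of_nat 0 - Z.of_nat 0)%Z = P y).
      rewrite pw1. replace (y + Z.of_nat 0 - Z.of_nat 0)%Z with y by lia. ring.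
    + intros k. change (pw beta 1 0 * pw beta 1 (S k) * P (y + Z.of_nat 0 - Z.of_nat (S k))%Z = 0).
      rewrite (pw1 beta (S k)). ring.
  - intros k. rewrite <- (Series_zero (fun j => pw beta 1 j * P (y + Z.of_nat (S k) - Z.of_nat j)%Z)).
    apply Series_ext. intros j.
    change (pw beta 1 (S k) * pw beta 1 j * P (y + Z.of_nat (S k) - Z.of_nat j)%Z =
       0 * (pw beta 1 j * P (y + Z.of_nat (S k) - Z.of_nat j)%Z)).
    rewrite (pw1 beta (S k)). ring.
Qed.

Lemma cR_plus (f g : R -> R) x : continuous f x -> continuous g x -> continuous (fun r => f r + g r) x.
Proof. intros H1 H2. exact (@continuous_plus R_UniformSpace R_AbsRing R_NormedModule f g x H1 H2). Qed.
Lemma cR_minus (f g : R -> R) x : continuous f x -> continuous g x -> continuous (fun r => f r - g r) x.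
Proof. intros H1 H2. exact (@continuous_minus R_UniformSpace R_AbsRing R_NormedModule f g x H1 H2). Qed.
Lemma cR_scal (c : R) (f : R -> R) x : continuous f x -> continuous (fun r => c * f r) x.
Proof. intros H1. exact (@continuous_scal_r R_UniformSpace R_AbsRing R_NormedModule c f x H1). Qed.

Section Int.
Variable beta : R.
Variable P : Z -> R.
Variable B : R.
Hypothesis HB : forall z, Rabs (P z) <= B.

Definition pp (y : Z) (r : R) : R := pZ beta P y r.

Lemma pp_derive y r :
  is_derive (pp y) r (- beta * (pp (y + 1) r + pp (y - 1) r - 2 * pp y r)).
Proof.
  unfold pp. rewrite <- (pZ_lap beta P B HB). apply (pZ_derive beta P B HB).
Qed.

Lemma pp_cont y r : continuous (pp y) r.
Proof. apply (@ex_derive_continuous R_AbsRing R_NormedModule). eexists. apply pp_derive. Qed.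

Lemma pp_exRInt y a b : ex_RInt (pp y) a b.
Proof. apply (@ex_RInt_continuous R_CompleteNormedModule). intros; apply pp_cont. Qed.

Definition II (t : R) (y : Z) : R := RInt (pp y) t 1.

Lemma lap_cont y r :
  continuous (fun r => - beta * (pp (y + 1) r + pp (y - 1) r - 2 * pp y r)) r.
Proof.
  apply cR_scal. apply cR_minus. apply cR_plus; apply pp_cont.
  apply cR_scal; apply pp_cont.
Qed.

Lemma E_id t y :
  - beta * (II t (y + 1) + II t (y - 1) - 2 * II t y) = P y - pp y t.
Proof.
  assert (H1 := @is_RInt_derive R_CompleteNormedModule (pp y) _ t 1 (fun x _ => pp_derive y x) (fun x _ => lap_cont y x)).
  apply is_RInt_unique in H1.
  match type of H1 with RInt ?f _ _ = _ => transitivity (RInt f t 1) end.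
  2:{ rewrite H1. unfold minus, plus, opp; simpl. unfold pp at 1. rewrite pZ_at1. reflexivity. }
  symmetry. apply is_RInt_unique.
  unfold II.
  assert (Q := is_RInt_scal _ t 1 (- beta) _
     (is_RInt_minus _ _ t 1 _ _
        (is_RInt_plus _ _ t 1 _ _ (RInt_correct _ _ _ (pp_exRInt (y + 1) t 1))
                               (RInt_correct _ _ _ (pp_exRInt (y - 1) t 1)))
        (is_RInt_scal _ t 1 2 _ (RInt_correct _ _ _ (pp_exRInt y t 1))))).
  exact Q.
Qed.

Lemma Int_diff t y z :
  RInt (fun r => pZ beta P y r - pZ beta P z r) t 1 = II t y - II t z.
Proof.
  apply is_RInt_unique.
  exact (is_RInt_minus _ _ t 1 _ _ (RInt_correct _ _ _ (pp_exRInt y t 1))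
            (RInt_correct _ _ _ (pp_exRInt z t 1))).
Qed.

Lemma Int_derive y z t :
  is_derive (fun s => RInt (fun r => pZ beta P y r - pZ beta P z r) s 1) t
    (- (pZ beta P y t - pZ beta P z t)).
Proof.
  apply (@is_derive_RInt' R_CompleteNormedModule (fun r => pZ beta P y r - pZ beta P z r) _ t 1).
  - apply filter_forall. intros a. apply RInt_correct.
    apply (@ex_RInt_continuous R_CompleteNormedModule). intros x _.
    apply cR_minus; apply pp_cont.
  - apply cR_minus; apply pp_cont.
Qed.
End Int.

Lemma fold_app_R (l : list R) x : fold_right Rplus 0 (l ++ x :: nil) = fold_right Rplus 0 l + x.
Proof. induction l; simpl. ring. rewrite IHl. ring. Qed.

Lemma zsum_nil f lo hi : (hi < lo)%Z -> zsum f lo hi = 0.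
Proof. intros H. unfold zsum. replace (Z.to_nat (hi - lo + 1)) with 0%nat by lia. reflexivity. Qed.

Lemma zsum_up f lo hi : (lo <= hi + 1)%Z -> zsum f lo (hi + 1) = zsum f lo hi + f (hi + 1)%Z.
Proof.
  intros H. unfold zsum.
  replace (Z.to_nat (hi + 1 - lo + 1)) with (S (Z.to_nat (hi - lo + 1))) by lia.
  rewrite seq_S, map_app. cbn [map]. rewrite fold_app_R. f_equal. f_equal. lia.
Qed.

Lemma zsum_down f lo hi : (lo - 1 <= hi)%Z -> zsum f (lo - 1) hi = f (lo - 1)%Z + zsum f lo hi.
Proof.
  intros H. unfold zsum.
  replace (Z.to_nat (hi - (lo - 1) + 1)) with (S (Z.to_nat (hi - lo + 1))) by lia.
  simpl. replace (lo - 1 + 0)%Z with (lo - 1)%Z by lia. f_equal.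
  rewrite <- seq_shift, map_map. f_equal. apply map_ext. intros k. f_equal. lia.
Qed.

Lemma inband_intro N a n y :
  (n <> 1%nat -> (a n <= y)%Z) -> (n <> N -> (y < a (S n))%Z) -> in_band N a n y.
Proof.
  intros H1 H2. unfold in_band, alow, aup, zltb, zleb.
  destruct (Nat.eqb_spec n 1) as [E1|E1]; destruct (Nat.eqb_spec n N) as [E2|E2]; split;
    try reflexivity; try (apply Z.leb_le; auto; fail);
    specialize (H2 E2); destruct (Z.leb_spec (a (S n)) y); try lia;
    destruct (Z.leb_spec y (a (S n))); try reflexivity; lia.
Qed.

Lemma coverage N a (HN : (1 <= N)%nat) :
  forall k, (1 <= k <= N)%nat -> forall z, ((k < N)%nat -> (z < a (S k))%Z) ->
  exists i, (1 <= i <= k)%nat /\ in_band N a i z.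
Proof.
  induction k as [|k IH]; intros Hk z Hz. lia.
  destruct (Nat.eq_dec k 0) as [->|Hk0].
  - exists 1%nat. split. lia. apply inband_intro. intros; lia. intros. apply Hz; lia.
  - destruct (Z_lt_le_dec z (a (S k))) as [h|h].
    + destruct (IH ltac:(lia) z (fun _ => h)) as [i [Hi Hb]]. exists i. split; [lia|auto].
    + exists (S k). split. lia. apply inband_intro. intros; auto. intros. apply Hz. lia.
Qed.

Fixpoint bsum (v : nat -> R) (k : nat) : R :=
  match k with O => 0 | S k => Rabs (v (S k)) + bsum v k end.

Lemma bsum_nn v k : 0 <= bsum v k.
Proof. induction k; simpl. lra. pose proof (Rabs_pos (v (S k))). lra. Qed.

Lemma bsum_ge v k i : (1 <= i <= k)%nat -> Rabs (v i) <= bsum v k.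
Proof.
  induction k; intros H. lia. simpl.
  destruct (Nat.eq_dec i (S k)) as [->|h].
  - pose proof (bsum_nn v k). lra.
  - pose proof (IHk ltac:(lia)). pose proof (Rabs_pos (v (S k))). lra.
Qed.

Lemma P_bound N v a P (HN : (1 <= N)%nat)
  (HP : forall (i : nat) (y : Z), (1 <= i <= N)%nat -> in_band N a i y -> P y = v i) :
  forall z, Rabs (P z) <= bsum v N.
Proof.
  intros z. destruct (coverage N a HN N ltac:(lia) z (fun h => ltac:(lia))) as [i [Hi Hb]].
  rewrite (HP i z ltac:(lia) Hb). apply bsum_ge. lia.
Qed.

Lemma parity (x y : Z) : ~ (exists z : Z, IZR z = (IZR x + IZR y - 1) / 2) -> ((x + y) mod 2 = 0)%Z.
Proof.
  intros H. destruct (Z.eq_dec ((x + y) mod 2) 0) as [h|h]; auto. exfalso. apply H.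
  exists ((x + y) / 2)%Z.
  assert (E : (x + y - 1 = 2 * ((x + y) / 2))%Z).
  { pose proof (Z.mod_pos_bound (x + y) 2). pose proof (Z.div_mod (x + y) 2). lia. }
  assert (IZR (x + y - 1) = IZR (2 * ((x + y) / 2))) by (rewrite E; reflexivity).
  rewrite minus_IZR, plus_IZR, mult_IZR in H0. simpl in H0. lra.
Qed.

Lemma U1_R_step (fR : Z -> R) (an1 y : Z) (pv : R) :
  (an1 <= y + 1 -> fR (y + 1) = pv)%Z -> ((y + 1 < an1)%Z -> pv = 0) ->
  zsum fR an1 (y + 1) - zsum fR an1 y = pv.
Proof.
  intros H1 H2. destruct (Z_lt_le_dec (y + 1) an1) as [h|h].
  - rewrite !zsum_nil by lia. rewrite H2 by auto. ring.
  - rewrite zsum_up by lia. rewrite H1 by auto. ring.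
Qed.

Lemma U1_L_step (fL : Z -> R) (an y : Z) (pv : R) :
  ((y <= an)%Z -> - fL (y - 1)%Z = pv) -> ((an < y)%Z -> pv = 0) ->
  zsum fL y (an - 1) - zsum fL (y - 1) (an - 1) = pv.
Proof.
  intros H1 H2. destruct (Z_lt_le_dec an y) as [h|h].
  - rewrite !zsum_nil by lia. rewrite H2 by auto. ring.
  - rewrite zsum_down by lia. rewrite <- H1 by auto. ring.
Qed.

Section Struct.
Variables (N : nat) (v : nat -> R) (a : nat -> Z) (P : Z -> R).
Hypothesis HN : (1 <= N)%nat.
Hypothesis Ha : forall i : nat, (2 <= i)%nat -> (i < N)%nat -> (a i < a (S i))%Z.
Hypothesis Hodd : forall i : nat, (2 <= i)%nat -> (i < N)%nat ->
     ~ exists z : Z, IZR z = (IZR (a i) + IZR (a (S i)) - 1) / 2.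
Hypothesis HP : forall (i : nat) (y : Z), (1 <= i <= N)%nat -> in_band N a i y -> P y = v i.
Variable n : nat.
Hypothesis Hn : (1 <= n <= N)%nat.

Definition Rs y := zleb (mhi N a n) (ZFin y).
Definition Ls y := zleb (ZFin y) (mlo N a n).
Definition Uo y := U1 N v a P n y.

Definition Struct : Prop :=
 (forall y, Rs y = true -> Uo (y + 1) - Uo y = P y - v n) /\
 (forall y, Ls y = true -> Uo y - Uo (y - 1) = P y - v n) /\
 (forall y, Ls y = negb (Rs y)) /\
 (forall y, Rs y = true -> Rs (y + 1) = true) /\
 (forall y, Ls y = true -> Ls (y - 1) = true) /\
 (forall y, zltb (mhi N a n) (ZFin y) = true -> Rs (y - 1) = true) /\
 (forall y, zltb (ZFin y) (mlo N a n) = true -> Ls (y + 1) = true) /\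
 (forall y z, mhi N a n = ZFin y -> mlo N a n = ZFin z -> z = (y - 1)%Z /\ Uo y - Uo (y - 1) = 0).

Lemma struct_1 : n = 1%nat -> Struct.
Proof.
  intros E.
  assert (Hm : mlo N a n = ZNinf) by (rewrite E; reflexivity).
  assert (Hh : mhi N a n = ZNinf) by (rewrite E; reflexivity).
  assert (HU : forall y, Uo y = zsumb (fun j => P (j - 1)%Z - v 1%nat) (aup N a 1) (ZFin y)).
  { intros y. unfold Uo, U1. rewrite Hm, Hh. rewrite E. simpl. ring. }
  unfold Struct, Rs, Ls. rewrite Hm, Hh. rewrite E. simpl.
  repeat split; try discriminate.
  - intros y _. rewrite !HU. unfold aup. destruct (Nat.eqb_spec 1 N) as [E'|E'].
    + simpl. rewrite (HP 1 y) by (auto; apply inband_intro; lia). ring.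
    + simpl. apply U1_R_step.
      * intros. f_equal. f_equal. ring.
      * intros. rewrite (HP 1 y); [ring|lia|]. apply inband_intro. lia. intros; lia.
Qed.

Lemma struct_N : n <> 1%nat -> n = N -> Struct.
Proof.
  intros H1 E.
  assert (Hm : mlo N a n = ZPinf) by (rewrite E; unfold mlo; rewrite (proj2 (Nat.eqb_neq N 1) (ltac:(rewrite <- E; exact H1))), Nat.eqb_refl; reflexivity).
  assert (Hh : mhi N a n = ZPinf) by (rewrite E; unfold mhi; rewrite (proj2 (Nat.eqb_neq N 1) (ltac:(rewrite <- E; exact H1))), Nat.eqb_refl; reflexivity).
  assert (Hl : alow N a n = ZFin (a N)) by (rewrite E; unfold alow; rewrite (proj2 (Nat.eqb_neq N 1) (ltac:(rewrite <- E; exact H1))); reflexivity).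
  assert (HU : forall y, Uo y = zsum (fun j => v N - P (j + 1)%Z) y (a N - 1)).
  { intros y. unfold Uo, U1. rewrite Hm, Hh, Hl. rewrite E. simpl. ring. }
  unfold Struct, Rs, Ls. rewrite Hm, Hh. rewrite E. simpl.
  repeat split; try discriminate.
  intros y _. rewrite !HU. apply U1_L_step.
  - intros. replace (y - 1 + 1)%Z with y by ring. ring.
  - intros. rewrite (HP N y); [ring|lia|]. apply inband_intro. lia. intros; lia.
Qed.

Lemma struct_mid : n <> 1%nat -> n <> N -> Struct.
Proof.
  intros H1 H2.
  set (an := a n). set (an1 := a (S n)).
  set (ml := ((an + an1 - 1) / 2)%Z).
  assert (Hlt : (an < an1)%Z) by (apply Ha; lia).
  assert (Hpar : ((an + an1) mod 2 = 0)%Z) by (apply parity, Hodd; lia).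
  assert (Hdiv : ((an + an1) / 2 = ml + 1)%Z /\ (an <= ml)%Z /\ (ml + 2 <= an1)%Z).
  { unfold ml. clear -Hlt Hpar. Z.div_mod_to_equations. lia. }
  destruct Hdiv as [Hd1 [Hd2 Hd3]].
  assert (Hm : mlo N a n = ZFin ml).
  { unfold mlo. rewrite (proj2 (Nat.eqb_neq n 1) H1), (proj2 (Nat.eqb_neq n N) H2). reflexivity. }
  assert (Hh : mhi N a n = ZFin (ml + 1)).
  { unfold mhi. rewrite (proj2 (Nat.eqb_neq n 1) H1), (proj2 (Nat.eqb_neq n N) H2).
    fold an an1. rewrite Hd1. reflexivity. }
  assert (Hl : alow N a n = ZFin an) by (unfold alow; rewrite (proj2 (Nat.eqb_neq n 1) H1); reflexivity).
  assert (Hu : aup N a n = ZFin an1) by (unfold aup; rewrite (proj2 (Nat.eqb_neq n N) H2); reflexivity).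
  assert (HU : forall y, Uo y =
     (if Z.leb y ml then zsum (fun j => v n - P (j + 1)%Z) y (an - 1) else 0) +
     (if Z.leb (ml + 1) y then zsum (fun j => P (j - 1)%Z - v n) an1 y else 0)).
  { intros y. unfold Uo, U1. rewrite Hm, Hh, Hl, Hu. reflexivity. }
  assert (Hband : forall y, (an <= y < an1)%Z -> P y = v n).
  { intros y Hy. apply HP. lia. apply inband_intro; intros; unfold an, an1 in Hy; lia. }
  unfold Struct, Rs, Ls. rewrite Hm, Hh. cbn [zleb zltb].
  split; [|split; [|split; [|split; [|split; [|split; [|split]]]]]].
  - intros y Hy. apply Z.leb_le in Hy. rewrite !HU.
    destruct (Z.leb_spec (y + 1) ml); [lia|]. destruct (Z.leb_spec y ml); [lia|].
    destruct (Z.leb_spec (ml + 1) (y + 1)); [|lia]. destruct (Z.leb_spec (ml + 1) y); [|lia].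
    replace (0 + zsum (fun j => P (j - 1)%Z - v n) an1 (y + 1) -
      (0 + zsum (fun j => P (j - 1)%Z - v n) an1 y)) with
      (zsum (fun j => P (j - 1)%Z - v n) an1 (y + 1) - zsum (fun j => P (j - 1)%Z - v n) an1 y) by ring.
    apply U1_R_step.
    + intros. replace (y + 1 - 1)%Z with y by ring. ring.
    + intros. rewrite Hband by lia. ring.
  - intros y Hy. apply Z.leb_le in Hy. rewrite !HU.
    destruct (Z.leb_spec y ml); [|lia]. destruct (Z.leb_spec (y - 1) ml); [|lia].
    destruct (Z.leb_spec (ml + 1) y); [lia|]. destruct (Z.leb_spec (ml + 1) (y - 1)); [lia|].
    replace (zsum (fun j => v n - P (j + 1)%Z) y (an - 1) + 0 -
      (zsum (fun j => v n - P (j + 1)%Z) (y - 1) (an - 1) + 0)) with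
      (zsum (fun j => v n - P (j + 1)%Z) y (an - 1) - zsum (fun j => v n - P (j + 1)%Z) (y - 1) (an - 1)) by ring.
    apply U1_L_step.
    + intros. replace (y - 1 + 1)%Z with y by ring. ring.
    + intros. rewrite Hband by lia. ring.
  - intros y. destruct (Z.leb_spec y ml); destruct (Z.leb_spec (ml + 1) y); try lia; reflexivity.
  - intros y Hy. apply Z.leb_le in Hy. apply Z.leb_le. lia.
  - intros y Hy. apply Z.leb_le in Hy. apply Z.leb_le. lia.
  - intros y Hy. apply andb_prop in Hy. destruct Hy as [Hy1 Hy2]. simpl in Hy1, Hy2.
    apply Z.leb_le in Hy1. destruct (Z.leb_spec y (ml + 1)); [simpl in Hy2; discriminate|]. apply Z.leb_le. lia.
  - intros y Hy. apply andb_prop in Hy. destruct Hy as [Hy1 Hy2]. simpl in Hy1, Hy2.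
    apply Z.leb_le in Hy1. destruct (Z.leb_spec ml y); [simpl in Hy2; discriminate|]. apply Z.leb_le. lia.
  - intros y z Ey Ez. injection Ey as Ey. injection Ez as Ez. split. lia.
    rewrite !HU. subst y. replace (ml + 1 - 1)%Z with ml by ring.
    destruct (Z.leb_spec (ml + 1) ml); [lia|]. destruct (Z.leb_spec ml ml); [|lia].
    destruct (Z.leb_spec (ml + 1) (ml + 1)); [|lia].
    rewrite !zsum_nil by lia. ring.
Qed.

Lemma struct_all : Struct.
Proof.
  destruct (Nat.eq_dec n 1). apply struct_1; auto.
  destruct (Nat.eq_dec n N). apply struct_N; auto. apply struct_mid; auto.
Qed.
End Struct.

Lemma deriv_affine (c k : R) (f : R -> R) x l :
  is_derive f x l -> is_derive (fun s => c + k * f s) x (k * l).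
Proof.
  intros H. apply is_derive_Reals in H. apply is_derive_Reals.
  pose proof (derivable_pt_lim_plus (fct_cte c) (mult_real_fct k f) x 0 (k * l)
    (derivable_pt_lim_const c x) (derivable_pt_lim_scal f k x l H)) as H2.
  replace (k * l) with (0 + k * l) by ring. exact H2.
Qed.

Theorem lemma4p3 (beta : R) (N : nat) (v : nat -> R) (a : nat -> Z) (P : Z -> R) :
  0 < beta ->
  (1 <= N)%nat ->
  (forall i : nat, (1 <= i)%nat -> (i < N)%nat -> v i < v (S i)) ->
  (forall i : nat, (2 <= i)%nat -> (i < N)%nat -> (a i < a (S i))%Z) ->
  (forall i : nat, (2 <= i)%nat -> (i < N)%nat ->
     ~ exists z : Z, IZR z = (IZR (a i) + IZR (a (S i)) - 1) / 2) ->
  (forall (i : nat) (y : Z), (1 <= i <= N)%nat -> in_band N a i y -> P y = v i) ->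
  forall n : nat, (1 <= n <= N)%nat ->
  forall t : R, 0 <= t < 1 ->
  (forall y : Z,
     zltb (mhi N a n) (ZFin y) = true \/ zltb (ZFin y) (mlo N a n) = true ->
     is_derive (fun s => Uf beta N v a P n y s) t
       (0 - beta * lapU beta N v a P n y t)) /\
  (forall y z : Z, mhi N a n = ZFin y -> mlo N a n = ZFin z ->
     is_derive (fun s => Uf beta N v a P n y s) t
       ((pZ beta P z t - v n) * beta - beta * lapU beta N v a P n y t)) /\
  (forall y z : Z, mlo N a n = ZFin y -> mhi N a n = ZFin z ->
     is_derive (fun s => Uf beta N v a P n y s) t
       ((v n - pZ beta P z t) * beta - beta * lapU beta N v a P n y t)) /\
  (forall y : Z, zleb (mhi N a n) (ZFin y) = true ->
     Uf beta N v a P n y t - Uf beta N v a P n (y + 1)%Z t - (v n - pZ beta P y t) = 0) /\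
  (forall y : Z, zleb (ZFin y) (mlo N a n) = true ->
     Uf beta N v a P n y t - Uf beta N v a P n (y - 1)%Z t + (v n - pZ beta P y t) = 0).
Proof.
  intros Hbeta HN Hv Ha Hodd HP n Hn t Ht.
  pose proof (P_bound N v a P HN HP) as HB.
  destruct (struct_all N v a P HN Ha Hodd HP n Hn) as [S1 [S2 [S3 [S4 [S5 [S6 [S7 S8]]]]]]].
  set (I := II beta P t).
  assert (UE : forall y, Uf beta N v a P n y t = Uo N v a P n y +
     (if Rs N a n y then beta * (I y - I (y - 1)%Z) else beta * (I (y + 1)%Z - I y))).
  { intros y. unfold Uf. change (zleb (mhi N a n) (ZFin y)) with (Rs N a n y).
    destruct (Rs N a n y); rewrite (Int_diff beta P _ HB); reflexivity. }
  assert (EE : forall y, - beta * (I (y + 1)%Z + I (y - 1)%Z - 2 * I y) = P y - pZ beta P y t).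
  { intros y. apply (E_id beta P _ HB). }
  assert (UD : forall y, is_derive (fun s => Uf beta N v a P n y s) t
     (if Rs N a n y then beta * - (pZ beta P y t - pZ beta P (y - 1)%Z t)
      else beta * - (pZ beta P (y + 1)%Z t - pZ beta P y t))).
  { intros y. unfold Uf. change (zleb (mhi N a n) (ZFin y)) with (Rs N a n y).
    destruct (Rs N a n y); apply deriv_affine; apply (Int_derive beta P _ HB). }
  assert (RL : forall y, Ls N a n y = true -> Rs N a n y = false).
  { intros y H. rewrite S3 in H. destruct (Rs N a n y); auto. }
  unfold lapU.
  split; [|split; [|split; [|split]]].
  - intros y [Hy|Hy].
    + pose proof (S6 y Hy) as R0. pose proof (S4 _ R0) as R1. rewrite Z.sub_add in R1.
      pose proof (S4 _ R1) as R2.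
      pose proof (UD y) as D. rewrite R1 in D.
      rewrite !UE. rewrite R0, R1, R2.
      pose proof (S1 y R1) as U1'. pose proof (S1 (y - 1)%Z R0) as U2'.
      pose proof (EE y) as E1. pose proof (EE (y - 1)%Z) as E2.
      rewrite ?Z.add_simpl_r, ?Z.sub_add in *.
      match goal with |- is_derive _ _ (0 - beta * ?L) =>
        replace L with (pZ beta P y t - pZ beta P (y - 1)%Z t) by lra end.
      replace (0 - beta * (pZ beta P y t - pZ beta P (y - 1) t)) with
        (beta * - (pZ beta P y t - pZ beta P (y - 1) t)) by ring. exact D.
    + pose proof (S7 y Hy) as L2. pose proof (S5 _ L2) as L1. rewrite Z.add_simpl_r in L1.
      pose proof (S5 _ L1) as L0.
      pose proof (UD y) as D. rewrite (RL _ L1) in D.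
      rewrite !UE. rewrite (RL _ L0), (RL _ L1), (RL _ L2).
      pose proof (S2 y L1) as U1'. pose proof (S2 (y + 1)%Z L2) as U2'.
      pose proof (EE y) as E1. pose proof (EE (y + 1)%Z) as E2.
      rewrite ?Z.add_simpl_r, ?Z.sub_add in *.
      match goal with |- is_derive _ _ (0 - beta * ?L) =>
        replace L with (pZ beta P (y + 1) t - pZ beta P y t) by lra end.
      replace (0 - beta * (pZ beta P (y + 1) t - pZ beta P y t)) with
        (beta * - (pZ beta P (y + 1) t - pZ beta P y t)) by ring. exact D.
  - intros y z Hy Hz. destruct (S8 y z Hy Hz) as [-> U0].
    assert (R1 : Rs N a n y = true) by (unfold Rs; rewrite Hy; simpl; apply Z.leb_refl).
    assert (R2 := S4 _ R1).
    assert (L0 : Ls N a n (y - 1)%Z = true) by (unfold Ls; rewrite Hz; simpl; apply Z.leb_refl).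
    pose proof (UD y) as D. rewrite R1 in D.
    rewrite !UE. rewrite R1, R2, (RL _ L0).
    pose proof (S1 y R1) as U1'. pose proof (EE y) as E1.
    rewrite ?Z.add_simpl_r, ?Z.sub_add in *.
    match goal with |- is_derive _ _ (_ - beta * ?L) =>
      replace L with (pZ beta P y t - v n) by lra end.
    match goal with |- is_derive _ _ ?w => replace w with
      (beta * - (pZ beta P y t - pZ beta P (y - 1) t)) by ring end. exact D.
  - intros y z Hy Hz. destruct (S8 z y Hz Hy) as [Ez U0]. assert (z = (y + 1)%Z) by lia. subst z.
    rewrite Z.add_simpl_r in U0.
    assert (L1 : Ls N a n y = true) by (unfold Ls; rewrite Hy; simpl; apply Z.leb_refl).
    assert (R2 : Rs N a n (y + 1)%Z = true) by (unfold Rs; rewrite Hz; simpl; apply Z.leb_refl).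
    assert (L0 := S5 _ L1).
    pose proof (UD y) as D. rewrite (RL _ L1) in D.
    rewrite !UE. rewrite R2, (RL _ L1), (RL _ L0).
    pose proof (S2 y L1) as U1'. pose proof (EE y) as E1.
    rewrite ?Z.add_simpl_r, ?Z.sub_add in *.
    match goal with |- is_derive _ _ (_ - beta * ?L) =>
      replace L with (v n - pZ beta P y t) by lra end.
    match goal with |- is_derive _ _ ?w => replace w with
      (beta * - (pZ beta P (y + 1) t - pZ beta P y t)) by ring end. exact D.
  - intros y R1. change (zleb (mhi N a n) (ZFin y)) with (Rs N a n y) in R1.
    pose proof (S4 _ R1) as R2.
    rewrite !UE. rewrite R1, R2.
    pose proof (S1 y R1) as U1'. pose proof (EE y) as E1.
    rewrite ?Z.add_simpl_r, ?Z.sub_add in *. lra.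
  - intros y L1. change (zleb (ZFin y) (mlo N a n)) with (Ls N a n y) in L1.
    pose proof (S5 _ L1) as L0.
    rewrite !UE. rewrite (RL _ L1), (RL _ L0).
    pose proof (S2 y L1) as U1'. pose proof (EE y) as E1.
    rewrite ?Z.add_simpl_r, ?Z.sub_add in *. lra.
Qed.
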